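(* Let $T\in C^{\mathrm{Lip}}_{d-1}(\mathbb{R}^N;\mathbb{Z})$ and let $U\in C^{\mathrm{Lip}}_{d}(\mathbb{R}^N;\mathbb{Z})$ satisfy $\partial U=2T$. Then the reduction $U\bmod 2\in C^{\mathrm{Lip}}_{d}(\mathbb{R}^N;\mathbb{Z}/2)$ is a mod-2 cycle, and \[\mathrm{FV}(T)\le\frac{\mathrm{mass}\,U+\mathrm{NOA}(U\bmod 2)}{2}.\]
   Context: For $\mathbb{K}\in\{\mathbb{Z},\mathbb{Z}/2\}$ (norm: usual absolute value on $\mathbb{Z}$; $|0|=0,|1|=1$ on $\mathbb{Z}/2$), a Lipschitz $d$-chain $A\in C^{\mathrm{Lip}}_d(\mathbb{R}^N;\mathbb{K})$ is a finite formal sum $\sum_i a_i\alpha_i$, $a_i\in\mathbb{K}$, $\alpha_i$ Lipschitz maps from the standard $d$-simplex $\Delta$ into $\mathbb{R}^N$, with the singular boundary operator; $\mathrm{mass}\,A=\sum_i|a_i|\int_\Delta|J_{\alpha_i}|$. $\mathrm{FV}(T)=\inf\{\mathrm{mass}\,V: V\in C^{\mathrm{Lip}}_{d}(\mathbb{R}^N;\mathbb{Z}),\ \partial V=T\}$. For a mod-2 Lipschitz $d$-cycle $A\in C^{\mathrm{Lip}}_d(\mathbb{R}^N;\mathbb{Z}/2)$, a pseudo-orientation of $A$ is an $R\in C^{\mathrm{Lip}}_d(\mathbb{R}^N;\mathbb{Z})$ with $\partial R=0$ and $R\equiv A \pmod 2$; the nonorientability area is $\mathrm{NOA}(A)=\inf\{\mathrm{mass}\,R: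 R \text{ a pseudo-orientation of } A\}$. *)

(* Defs.v *)
From HB Require Import structures.
From mathcomp Require Import all_boot all_order all_algebra.
From mathcomp Require Import all_classical all_reals all_analysis.
Set Implicit Arguments. Unset Strict Implicit. Unset Printing Implicit Defensive.
Import Order.TTheory GRing.Theory Num.Theory.
Import numFieldNormedType.Exports.
Local Open Scope classical_set_scope.
Local Open Scope ring_scope.

Section LipChains.
Variables (R : realType) (N : nat).

(** The standard m-simplex, realized in R^m with vertices 0, e_1, ..., e_m. *)
Definition simplex (m : nat) : set 'rV[R]_m :=
  [set x | (forall i, 0 <= x ord0 i) /\ \sum_i x ord0 i <= 1].
Arguments simplex m : clear implicits.

Definition open_simplex (m : nat) : set 'rV[R]_m :=
  [set x | (forall i, 0 < x ord0 i) /\ \sum_i x ord0 i < 1].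
Arguments open_simplex m : clear implicits.

(** Vertex j (j = 0..m) of the standard m-simplex: v_0 = 0, v_j = e_j. *)
Definition vertex (m : nat) (j : 'I_m.+1) : 'rV[R]_m :=
  \row_(l < m) (if (l.+1 == j)%N then 1 else 0).

Definition bary (m : nat) (y : 'rV[R]_m) (k : 'I_m.+1) : R :=
  if (val k == 0)%N then 1 - \sum_j y ord0 j
  else \sum_(j < m | (j.+1 == k)%N) y ord0 j.

(** i-th face map Delta_m -> Delta_{m+1}: the affine map sending the vertices
    of Delta_m, in order, to the vertices of Delta_{m+1} other than the i-th. *)
Definition facemap (m : nat) (i : 'I_m.+2) (y : 'rV[R]_m) : 'rV[R]_m.+1 :=
  \sum_(k < m.+1) bary y k *: vertex (lift i k).

(** A singular m-simplex in R^N is a map Delta_m -> R^N; we represent it by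
    a total function normalized to be 0 outside Delta_m, so that equality of
    singular simplices is equality of these functions. *)
Definition smap (m : nat) := 'rV[R]_m -> 'rV[R]_N.

Definition canonical_smap m (s : smap m) : Prop :=
  forall x, ~ simplex m x -> s x = 0.

Definition lipschitz_simplex m (s : smap m) : Prop :=
  canonical_smap s /\
  exists k : R, forall x y, simplex m x -> simplex m y ->
    `|s x - s y| <= k * `|x - y|.

Definition face m (s : smap m.+1) (i : 'I_m.+2) : smap m :=
  fun y => if `[< simplex m y >] then s (facemap i y) else 0.

(** A chain with coefficients in K = finitely supported function on
    singular simplices; a Lipschitz chain is supported on Lipschitz simplices. *)
Definition supp (K : nmodType) m (c : smap m -> K) : set (smap m) :=
  [set s | c s != 0].

Definition lipchain (K : nmodType) m (c : smap m -> K) : Prop :=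
  finite_set (supp c) /\ forall s, c s != 0 -> lipschitz_simplex s.

Definition bd (K : pzRingType) m (c : smap m.+1 -> K) : smap m -> K :=
  fun t => \sum_(s \in supp c)
             \sum_(i < m.+2) (((-1) ^+ i * c s) *+ (face s i == t)).

Definition mod2 m (c : smap m -> int) : smap m -> 'Z_2 :=
  fun s => (c s)%:~R.

(** Jacobian |J_s|(x) = sqrt det (Ds(x) Ds(x)^T) (rows = partial derivatives),
    at points of the open simplex where s is differentiable, 0 elsewhere
    (a null set, by Rademacher's theorem, for Lipschitz s). *)
Definition jac m (s : smap m) (x : 'rV[R]_m) : R :=
  let M := \matrix_(j < m) ('d s x (delta_mx ord0 j)) in
  Num.sqrt (\det (M *m M^T)).

Definition jac_integrand m (s : smap m) (x : 'rV[R]_m) : \bar R :=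
  if `[< open_simplex m x /\ differentiable s x >] then (jac s x)%:E
  else 0%E.

(** Lebesgue integral of a nonnegative function on R^m, as the iterated
    one-dimensional Lebesgue integral (equal to the m-dimensional Lebesgue
    integral for measurable nonnegative integrands, by Tonelli). *)
Fixpoint iint (m : nat) : ('rV[R]_m -> \bar R) -> \bar R :=
  match m with
  | 0 => fun f => f 0
  | m'.+1 => fun f =>
      (\int[@lebesgue_measure R]_(t in [set: R])
          iint (fun y : 'rV[R]_m' => f (row_mx (t%:M : 'rV[R]_1) y)))%E
  end.

Definition area m (s : smap m) : \bar R := iint (jac_integrand s).

Definition mass m (c : smap m -> int) : \bar R :=
  (\sum_(s \in supp c) ((`|c s|%:~R : R)%:E * area s))%E.

Definition FV m (T : smap m -> int) : \bar R :=
  ereal_inf [set mass V | V in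
     [set V : smap m.+1 -> int | lipchain V /\ bd V = T]].

Definition pseudo_orientation m (A : smap m.+1 -> 'Z_2) (P : smap m.+1 -> int)
  : Prop := lipchain P /\ bd P = (fun _ => 0) /\ mod2 P = A.

Definition NOA m (A : smap m.+1 -> 'Z_2) : \bar R :=
  ereal_inf [set mass P | P in [set P | pseudo_orientation A P]].

End LipChains.

(* Main.v *)
Require Import Defs.
From HB Require Import structures.
From mathcomp Require Import all_boot all_order all_algebra.
From mathcomp Require Import all_classical all_reals all_analysis.
From mathcomp Require Import finmap.
From mathcomp Require Import lra.
Import Order.TTheory GRing.Theory Num.Theory.
Local Open Scope classical_set_scope.
Local Open Scope ring_scope.

Set Implicit Arguments.
Section S.
Variables (R : realType) (N : nat).

Definition bterm {K : pzRingType} {m} (c : smap R N m.+1 -> K) (t : smap R N m) s :=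
  \sum_(i < m.+2) (((-1) ^+ i * c s) *+ (face s i == t)).

Lemma bdE (K : pzRingType) m (c : smap R N m.+1 -> K) (A : set (smap R N m.+1)) t :
  finite_set A -> supp c `<=` A ->
  bd c t = \sum_(s <- fset_set A) bterm c t s.
Proof.
move=> fA sA; rewrite /bd (fsbig_widen (supp c) A) //; first exact: fsbig_finite.
move=> s [_ ns] /=; apply: big1 => i _.
have -> : c s = 0 by apply/eqP; apply/negPn/negP => h; exact: ns h.
by rewrite mulr0 mul0rn.
Qed.

Lemma iint_ge0 m (f : 'rV[R]_m -> \bar R) : (forall x, (0 <= f x)%E) -> (0 <= iint f)%E.
Proof.
elim: m f => [|m IH] f hf /=; first exact: hf.
apply: integral_ge0 => t _; apply: IH => y; exact: hf.
Qed.

Lemma area_ge0 m (s : smap R N m) : (0 <= area s)%E.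
Proof.
apply: iint_ge0 => x; rewrite /jac_integrand; case: ifP => // _; rewrite lee_fin; exact: sqrtr_ge0.
Qed.

Lemma massE m (c : smap R N m -> int) (A : set (smap R N m)) :
  finite_set A -> supp c `<=` A ->
  mass c = (\sum_(s <- fset_set A) ((`|c s|%:~R : R)%:E * area s))%E.
Proof.
move=> fA sA; rewrite /mass (fsbig_widen (supp c) A) //; first exact: fsbig_finite.
move=> s [_ ns] /=.
have -> : c s = 0 by apply/eqP; apply/negPn/negP => h; exact: ns h.
by rewrite mul0e.
Qed.

Lemma mass_ge0 m (c : smap R N m -> int) : (0 <= mass c)%E.
Proof.
apply: fsume_ge0 => s _; apply: mule_ge0; last exact: area_ge0.
by rewrite lee_fin ler0z.
Qed.

Lemma Z2_int0 (z : int) : ((z%:~R : 'Z_2) == 0) = (2 %| z)%Z.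
Proof.
have h2 : (2%:~R : 'Z_2) = 0 by rewrite -pmulrn; exact: pchar_Zp.
rewrite {1}(divz_eq z 2) intrD intrM h2 mulr0 add0r.
have := modz_ge0 z (isT : (2:int) != 0); have := ltz_pmod z (isT : (0:int) < 2).
move=> hl hg; apply/idP/idP.
  move=> h; apply/dvdz_mod0P; move: h hl hg.
  by case: (z %% 2)%Z => [[|[|k]]|k].
by move/dvdz_mod0P => ->.
Qed.

Lemma key n (T : smap R N n -> int) (U : smap R N n.+1 -> int) P :
  lipchain U -> bd U = (fun t => 2 * T t) ->
  pseudo_orientation (mod2 U) P ->
  (FV T <= (mass U + mass P) * (2^-1)%:E)%E.
Proof.
move=> lU hbd [lP [bP mP]].
have dv : forall s, (2 %| U s - P s)%Z.
  move=> s; rewrite -Z2_int0 intrB; have := congr1 (fun f => f s) mP.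
  by rewrite /mod2 /= => ->; rewrite subrr.
pose W := fun s => ((U s - P s) %/ 2)%Z.
have hW : forall s, W s * 2 = U s - P s by move=> s; exact: divzK.
pose A := supp U `|` supp P.
have fA : finite_set A by rewrite /A finite_setU; split; [exact: lU.1|exact: lP.1].
have sW : supp W `<=` A.
  move=> s /= hs; case: (eqVneq (U s) 0) => hu; last by left.
  case: (eqVneq (P s) 0) => hp; last by right.
  by exfalso; move: hs; rewrite /supp /= /W hu hp subrr div0z eqxx.
have sU : supp U `<=` A by move=> s hs; left.
have sP : supp P `<=` A by move=> s hs; right.
have lW : lipchain W.
  split; first exact: sub_finite_set sW fA.
  by move=> s hs; case: (sW s hs) => h; [exact: lU.2|exact: lP.2].
have bW : bd W = T.
  apply: funext => t.
  have e1 : bd W t * 2 = bd U t - bd P t.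
    rewrite !(bdE (A:=A)) // big_distrl -sumrB; apply: eq_bigr => s _.
    rewrite /bterm big_distrl -sumrB; apply: eq_bigr => i _.
    case: (face s i == t); rewrite /= ?mulr1n ?mulr0n ?mul0r ?subr0 //.
    by rewrite -mulrA hW mulrBr.
  have := congr1 (fun f => f t) bP; have := congr1 (fun f => f t) hbd.
  move=> /= hU hP; rewrite hU hP subr0 in e1.
  by apply: (mulIf (isT : (2:int) != 0)); rewrite e1 mulrC.
apply: (@le_trans _ _ (mass W)).
  by apply: ereal_inf_lbound; exists W.
rewrite !(massE (A:=A)) // -big_split /= ge0_sume_distrl; last first.
  move=> s _; apply: adde_ge0; apply: mule_ge0; rewrite ?lee_fin ?ler0z //; exact: area_ge0.
apply: lee_sum => s _.
rewrite -ge0_muleDl ?lee_fin ?ler0z // muleAC -EFinM.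
apply: lee_wpmul2r; first exact: area_ge0.
rewrite lee_fin ler_pdivlMr //.
have : (`|W s| * 2 <= `|U s| + `|P s|)%R.
  by rewrite -[X in _ * X]/(`|2%:Z|) -normrM hW; exact: ler_normB.
rewrite -(ler_int R) intrM intrD.
by rewrite intrD.

Qed.

End S.

Theorem lemma1p2 (R : realType) (N n : nat)
  (T : smap R N n -> int) (U : smap R N n.+1 -> int) :
  lipchain T -> lipchain U ->
  bd U = (fun t => 2 * T t) ->
  bd (mod2 U) = (fun _ => 0) /\
  (FV T <= (mass U + NOA (mod2 U)) * (2^-1)%:E)%E.
Proof.
move=> lT lU hbd; split.
  apply: funext => t.
  have sU : supp (mod2 U) `<=` supp U.
    move=> s /=; apply: contra => /eqP h; by rewrite /mod2 h.
  rewrite (bdE (A:=supp U)) //; last exact: lU.1.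
  have := congr1 (fun f => (f t)%:~R : 'Z_2) hbd; rewrite /= (bdE (A:=supp U)) //; last exact: lU.1.
  have -> : ((2 * T t)%:~R : 'Z_2) = 0 by apply/eqP; rewrite Z2_int0 dvdz_mulr.
  rewrite rmorph_sum => e; apply: etrans e; apply: eq_bigr => s _.
  rewrite /bterm rmorph_sum; apply: eq_bigr => i _.
  by rewrite rmorphMn rmorphM rmorphXn rmorphN1.
have N0 : (0 <= NOA (mod2 U))%E.
  by apply/ereal_infP => y [P _ <-]; exact: mass_ge0.
have U0 := mass_ge0 U.
apply/lee_addgt0Pr => e e0.
have h2 : (0 < (2^-1 : R)%:E)%E by rewrite lte_fin invr_gt0.
case hN : (NOA (mod2 U)) N0 => [a| |] // _.
  have : (NOA (mod2 U) < (a + 2 * e)%:E)%E.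
    by rewrite hN lte_fin ltrDl mulr_gt0.
  move/ereal_inf_lt => [_ [P hP <-] hlt].
  apply: (le_trans (@key R N n T U P lU hbd hP)).
  case hu : (mass U) U0 => [r| |] // _.
    apply: (le_trans (lee_wpmul2r (ltW h2) (leeD2l (r%:E) (ltW hlt)))).
    rewrite -[X in (X <= _)%E]/(((r + (a + 2 * e)) * 2^-1)%:E) -[X in (_ <= X)%E]/(((r + a) * 2^-1 + e)%:E) lee_fin; lra.
  have -> : ((+oo + a%:E) * (2^-1)%:E + e%:E = +oo)%E by rewrite addye // gt0_mulye.
  exact: leey.
rewrite addey; first by rewrite gt0_mulye // leey.
by apply: contraTneq U0 => ->.
Qed.
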